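(* A linear map $T:\mathbb C^d\to\mathbb C^d$ ($d$ a positive integer) is recurrent if and only if it is similar to a diagonal matrix all of whose diagonal entries have modulus $1$.
   Context: $T$ is recurrent if for every non-empty open $U\subset\mathbb C^d$ there is a positive integer $k$ with $U\cap T^{-k}(U)\neq\emptyset$. *)

(* Defs.v *)
From HB Require Import structures.
From mathcomp Require Import all_boot all_order all_algebra.
From mathcomp Require Import complex.
From mathcomp Require Import all_classical all_reals all_analysis.
Set Implicit Arguments. Unset Strict Implicit. Unset Printing Implicit Defensive.
Import Order.TTheory GRing.Theory Num.Theory.
Import numFieldNormedType.Exports.
Local Open Scope classical_set_scope.
Local Open Scope ring_scope.

(* The complex numbers, seen as a numClosedFieldType so that the canonical
   (modulus-induced) topology of MathComp-Analysis applies. *)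
Definition Cplx (R : realType) : numClosedFieldType := R[i].

(* The linear map T : C^d -> C^d is represented by a matrix acting on row
   vectors: x |-> x *m T.  C^d carries the (product = Euclidean) topology. *)
Definition lin_of_mx (R : realType) (d : nat) (T : 'M[Cplx R]_d)
  : 'rV[Cplx R]_d -> 'rV[Cplx R]_d := fun x => x *m T.

Definition recurrent (R : realType) (d : nat) (T : 'M[Cplx R]_d) : Prop :=
  forall U : set 'rV[Cplx R]_d, open U -> U !=set0 ->
    exists k : nat, (0 < k)%N /\ U `&` (iter k (lin_of_mx T) @^-1` U) !=set0.

Definition similar_to_unimodular_diag (R : realType) (d : nat) (T : 'M[Cplx R]_d)
  : Prop :=
  exists (P : 'M[Cplx R]_d) (D : 'rV[Cplx R]_d),
    P \in unitmx /\ (forall j, `|D 0 j| = 1) /\ T = invmx P *m diag_mx D *m P.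

(* Main.v *)
Require Import Defs.
From HB Require Import structures.
From mathcomp Require Import all_boot all_order all_algebra.
From mathcomp Require Import complex.
From mathcomp Require Import all_classical all_reals all_analysis.
From mathcomp Require Import ring lra.
Import Order.TTheory GRing.Theory Num.Theory.
Import numFieldNormedType.Exports.
Local Open Scope ring_scope.
Local Open Scope classical_set_scope.
Section G.
Variable R : rcfType.
Lemma Re_leG (a b : R) : `|a| <= Normc.normc (a +i* b)%C.
Proof.
rewrite /Normc.normc -sqrtr_sqr ler_sqrt; last by rewrite addr_ge0 // sqr_ge0.
by rewrite lerDl sqr_ge0.
Qed.
Lemma Im_leG (a b : R) : `|b| <= Normc.normc (a +i* b)%C.
Proof.
rewrite /Normc.normc -sqrtr_sqr ler_sqrt; last by rewrite addr_ge0 // sqr_ge0.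
by rewrite lerDr sqr_ge0.
Qed.
Lemma nC_ReImG (a b : R) : Normc.normc (a +i* b)%C <= `|a| + `|b|.
Proof.
rewrite /Normc.normc -[X in _ <= X]ger0_norm ?addr_ge0 //.
rewrite -(sqrtr_sqr (`|a| + `|b|)) ler_sqrt ?sqr_ge0 //.
have ha : `|a| ^+ 2 = a ^+ 2 := real_normK (num_real a).
have hb : `|b| ^+ 2 = b ^+ 2 := real_normK (num_real b).
have := normr_ge0 a; have := normr_ge0 b.
nra.
Qed.
Lemma ReBG (u v : R[i]) : complex.Re (u - v) = complex.Re u - complex.Re v.
Proof. by case: u v => a b [c e]; reflexivity. Qed.
Lemma ImBG (u v : R[i]) : complex.Im (u - v) = complex.Im u - complex.Im v.
Proof. by case: u v => a b [c e]; reflexivity. Qed.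
End G.
Section S.
Variable R : realType.
Local Notation C := (Cplx R).
Definition nC (z : C) : R := Normc.normc (z : R[i]).
Lemma normE (z : C) : `|z| = (nC z)%:C%C.
Proof. by rewrite /nC normc_def; case: z. Qed.
Lemma nC_ge0 z : 0 <= nC z.
Proof. by rewrite /nC; case: z => a b /=; apply: sqrtr_ge0. Qed.
Lemma nCM (a b : C) : nC (a * b) = nC a * nC b.
Proof. exact: Normc.normcM. Qed.
Lemma nCD (a b : C) : nC (a + b) <= nC a + nC b.
Proof. exact: le_normcD. Qed.
Lemma nCN (a : C) : nC (- a) = nC a.
Proof. exact: normcN. Qed.
Lemma nC1 : nC 1 = 1.
Proof. exact: Normc.normc1. Qed.
Lemma nC0 : nC 0 = 0.
Proof. exact: Normc.normc0. Qed.
Lemma nC_eq0 z : nC z = 0 -> z = 0.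
Proof. exact: Normc.eq0_normc. Qed.
Lemma nCX (a : C) k : nC (a ^+ k) = nC a ^+ k.
Proof. elim: k => [|k IH]; first by rewrite !expr0 nC1. by rewrite !exprS nCM IH. Qed.
Lemma nCn k : nC (k%:R) = k%:R.
Proof. rewrite /nC -[k%:R]/(1 *+ k) normcMn. by rewrite -[(1 : C)]/(1 : R[i]) Normc.normc1. Qed.
Lemma nCB (a b : C) : nC (a - b) = nC (b - a).
Proof. by rewrite -nCN opprB. Qed.
Lemma ltC (a : C) (r : R) : (`|a| < r%:C%C) = (nC a < r).
Proof. by rewrite normE ltcR. Qed.
Lemma ballmxP d (x y : 'rV[C]_d) (e : C) : ball x e y <-> (0 < e /\ forall j, `|x 0 j - y 0 j| < e).
Proof.
rewrite /ball /= /mx_ball; split => -[e0 H]; split => //.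
  by move=> j; have := H 0 j; rewrite -ball_normE /ball_.
by move=> i j; rewrite ord1 -ball_normE /ball_; apply: H.
Qed.
Lemma open_ballP d (U : set 'rV[C]_d) : open U <-> forall x, U x -> exists2 e : C, 0 < e & forall y : 'rV[C]_d, (forall j, `|x 0 j - y 0 j| < e) -> U y.
Proof.
rewrite openE; split.
  move=> oU x Ux; have /nbhs_ballP[e e0 He] := oU x Ux.
  by exists e => // y Hy; apply: He; apply/ballmxP.
move=> H x Ux; apply/nbhs_ballP; have [e e0 He] := H x Ux.
by exists e => // y /ballmxP [_ Hy]; apply: He.
Qed.
Lemma open_ballR d (U : set 'rV[C]_d) : open U <-> forall x, U x -> exists2 e : R, 0 < e & forall y : 'rV[C]_d, (forall j, nC (x 0 j - y 0 j) < e) -> U y.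
Proof.
rewrite open_ballP; split => H x Ux; have [e e0 He] := H x Ux.
  move: e e0 He; case=> a b; rewrite ltcE /= => /andP[/eqP b0 a0] He.
  exists a => // y Hy; apply: He => j; rewrite normE.
  by rewrite b0 -[(_ +i* 0)%C]/(a%:C%C) ltcR.
exists e%:C%C; first by rewrite ltcR.
by move=> y Hy; apply: He => j; rewrite -ltC.
Qed.
Lemma fun_est d (w : 'cV[C]_d) (x y : 'rV[C]_d) (e : R) :
  (forall j, nC (x 0 j - y 0 j) < e) ->
  nC ((x *m w) 0 0 - (y *m w) 0 0) <= e * \sum_i nC (w i 0).
Proof.
move=> H; rewrite !mxE -sumrB mulr_sumr.
apply: le_trans (_ : \sum_i nC ((x 0 i - y 0 i) * w i 0) <= _).
  elim/big_ind2: _ => //.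
  - by rewrite nC0.
  - move=> a1 a2 b1 b2 h1 h2; apply: le_trans (nCD _ _) _; exact: lerD.
  - by move=> i _; rewrite mulrBl.
apply: ler_sum => i _; rewrite nCM; apply: ler_wpM2r; first exact: nC_ge0.
exact/ltW/H.
Qed.
Lemma open_fun d (w : 'cV[C]_d) (a : C) (r : R) :
  open [set x : 'rV[C]_d | nC ((x *m w) 0 0 - a) < r].
Proof.
apply/open_ballR => x /= Hx.
set m := r - nC ((x *m w) 0 0 - a).
set K := 1 + \sum_i nC (w i 0).
have K0 : 0 < K by rewrite ltr_pwDl // sumr_ge0 // => i _; exact: nC_ge0.
have m0 : 0 < m by rewrite subr_gt0.
exists (m / K); first exact: divr_gt0.
move=> y Hy; have Hle := @fun_est _ w _ _ _ Hy.
have : nC ((y *m w) 0 0 - a) <= nC ((x *m w) 0 0 - (y *m w) 0 0) + nC ((x *m w) 0 0 - a).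
  rewrite (nCB ((x *m w) 0 0)).
  have -> : (y *m w) 0 0 - a = ((y *m w) 0 0 - (x *m w) 0 0) + ((x *m w) 0 0 - a).
    by rewrite addrA subrK.
  exact: nCD.
move=> H2; apply: le_lt_trans H2 _.
have : m / K * \sum_i nC (w i 0) < m.
  rewrite mulrAC ltr_pdivrMr // ltr_pM2l // /K ltrDr //.
rewrite /m; set s := nC ((x *m w) 0 0 - a); move=> H3.
have := le_lt_trans Hle H3; rewrite /m -/s => H4.
by move: H4; rewrite /m; lra.
Qed.
Lemma iter_lin d (T : 'M[C]_d) k x : iter k (lin_of_mx T) x = x *m T ^+ k.
Proof.
elim: k => [|k IH]; first by rewrite expr0 mulmx1.
by rewrite iterS IH /lin_of_mx exprSr -mulmxA mulmxE.
Qed.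
Lemma dual_exists d (w : 'cV[C]_d) : w != 0 -> exists x0 : 'rV[C]_d, (x0 *m w) 0 0 = 1.
Proof.
move=> w0.
have [i wi] : exists i, w i 0 != 0.
  apply/existsP; apply: contraNT w0; rewrite negb_exists => /forallP H.
  by apply/eqP/matrixP => i j; rewrite ord1 mxE; apply/eqP; have := H i; rewrite negbK.
exists ((w i 0)^-1 *: delta_mx 0 i).
by rewrite -scalemxAl -rowE mxE mxE mulVf.
Qed.
Lemma near1 (u : C) r : nC (u - 1) < r -> 1 - r < nC u /\ nC u < 1 + r.
Proof.
move=> H; split.
  have := nCD u (1 - u); rewrite (addrC u (1 - u)) subrK.
  by rewrite nC1 nCB; lra.
have := nCD (u - 1) 1; rewrite subrK.
by rewrite nC1; lra.
Qed.
Lemma nC_lb (u v : C) : nC v - nC u <= nC (u + v).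
Proof.
have := nCD (u + v) (- u); rewrite (addrC u v) addrK.
by rewrite nCN; lra.
Qed.
Lemma mulmx_col_apply d (x : 'rV[C]_d) (M : 'M[C]_d) (w : 'cV[C]_d) :
  ((x *m M) *m w) 0 0 = (x *m (M *m w)) 0 0.
Proof. by rewrite mulmxA. Qed.
Lemma rec_eig d (T : 'M[C]_d) (w : 'cV[C]_d) (l : C) :
  recurrent T -> w != 0 -> T *m w = l *: w -> nC l = 1.
Proof.
move=> rT w0 Tw.
have Tkw k : T ^+ k *m w = l ^+ k *: w.
  elim: k => [|k IH]; first by rewrite !expr0 mul1mx scale1r.
  by rewrite exprS -mulmxE -mulmxA IH -scalemxAr Tw scalerA -exprSr exprS.
have [x0 fx0] := @dual_exists _ w w0.
set n := nC l; apply/eqP; apply/negPn/negP => n1.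
have n0 : 0 <= n := nC_ge0 l.
set r := `|n - 1| / (n + 1).
have r0 : 0 < r by rewrite divr_gt0 ?normr_gt0 ?subr_eq0 //; lra.
have := rT [set x | nC ((x *m w) 0 0 - 1) < r] (open_fun _ _ _ _).
case.
  by exists x0; rewrite /= fx0 subrr nC0.
move=> k [k0 [x [/= Hx]]]; rewrite /preimage /= iter_lin mulmx_col_apply Tkw.
rewrite -scalemxAr mxE => Hy.
have [a1 a2] := near1 _ _ Hx; have [b1 b2] := near1 _ _ Hy.
move: b1 b2; rewrite nCM nCX -/n; set a := nC ((x *m w) 0 0) => b1 b2.
have a0 : 0 <= a by exact: nC_ge0.
clear Hy; case: k k0 b1 b2 => // k _; set p := n ^+ k.+1 => b1 b2.
have pE : p = n * n ^+ k by rewrite /p exprS.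
move: n1; rewrite neq_lt => /orP[] nlt.
  have ge : n ^+ k <= 1 by rewrite exprn_ile1 // ltW.
  have rE : r * (n + 1) = 1 - n.
    by rewrite /r ltr0_norm ?subr_lt0 // mulfVK ?opprB //; apply/lt0r_neq0; lra.
  have h1 : p <= n by rewrite pE; rewrite ler_piMr //; exact: ltW.
  have h2 : p * a <= n * a by rewrite ler_wpM2r.
  have h3 : n * a <= n * (1 + r) by rewrite ler_wpM2l // ltW.
  by move: b1 h2 h3 rE; clear; lra.
have ge : 1 <= n ^+ k by rewrite exprn_ege1 // ltW.
have rE : r * (n + 1) = n - 1.
  by rewrite /r gtr0_norm ?subr_gt0 // mulfVK //; apply/lt0r_neq0; lra.
have h1 : n <= p by rewrite pE; rewrite ler_peMr //; lra.
have h2 : n * a <= p * a by rewrite ler_wpM2r.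
have h3 : n * (1 - r) <= n * a by rewrite ler_wpM2l // ?ltW //; lra.
by move: b2 h2 h3 rE; clear; lra.
Qed.
Lemma mx00B (A B : 'M[C]_1) : (A - B) 0 0 = A 0 0 - B 0 0.
Proof. by rewrite !mxE. Qed.
Lemma mx00D (A B : 'M[C]_1) : (A + B) 0 0 = A 0 0 + B 0 0.
Proof. by rewrite !mxE. Qed.
Lemma mx00Z c (A : 'M[C]_1) : (c *: A) 0 0 = c * A 0 0.
Proof. by rewrite !mxE. Qed.
Lemma rec_chain d (T : 'M[C]_d) (w1 w2 : 'cV[C]_d) (l : C) :
  recurrent T -> w1 != 0 -> nC l = 1 -> T *m w1 = l *: w1 ->
  T *m w2 = l *: w2 + w1 -> False.
Proof.
move=> rT w0 nl Tw1 Tw2.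
have [x0 fx0] := @dual_exists _ w1 w0.
set w3 := w2 - (x0 *m w2) 0 0 *: w1.
have Tw3 : T *m w3 = l *: w3 + w1.
  rewrite /w3 mulmxBr -scalemxAr Tw2 Tw1 scalerBr !scalerA mulrC; by rewrite addrAC.
have f30 : (x0 *m w3) 0 0 = 0.
  by rewrite /w3 mulmxBr -scalemxAr mx00B mx00Z fx0 mulr1 subrr.
have Tkw1 k : T ^+ k *m w1 = l ^+ k *: w1.
  elim: k => [|k IH]; first by rewrite !expr0 mul1mx scale1r.
  by rewrite exprS -mulmxE -mulmxA IH -scalemxAr Tw1 scalerA -exprSr exprS.
have Tkw3 k : T ^+ k.+1 *m w3 = l ^+ k.+1 *: w3 + (k.+1%:R * l ^+ k) *: w1.
  elim: k => [|k IH]; first by rewrite expr1 Tw3 expr0 mulr1 scale1r.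
  rewrite exprS -mulmxE -mulmxA IH mulmxDr -!scalemxAr Tw3 Tw1 scalerDr !scalerA.
  rewrite -addrA -scalerDl; congr (_ + _ *: _); first by rewrite -exprSr exprS.
  by rewrite !exprS -[k.+2]addn1 natrD; ring.
pose U := [set x : 'rV[C]_d | nC ((x *m w1) 0 0 - 1) < 1/3] `&`
          [set x : 'rV[C]_d | nC ((x *m w3) 0 0 - 0) < 1/3].
have oU : open U by apply: openI; apply: open_fun.
have := rT U oU; case.
  by exists x0; split; rewrite /= ?fx0 ?f30 subrr nC0.
move=> k [k0 [x [[/= Hx1 Hx3] [/= _]]]]; rewrite /preimage /= iter_lin.
case: k k0 => // k _; rewrite mulmx_col_apply Tkw3 mulmxDr -!scalemxAr mx00D !mx00Z subr0.
move: Hx3; rewrite subr0 => Hx3.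
have [a1 _] := near1 _ _ Hx1.
set a := (x *m w1) 0 0 in a1 *; set b := (x *m w3) 0 0 in Hx3 *.
have := nC_lb (l ^+ k.+1 * b) ((k.+1%:R * l ^+ k) * a).
rewrite !nCM !nCX nl !expr1n mul1r nCn => H1 H2.
have : 2/3 <= k.+1%:R * nC a.
  have : 1 <= (k.+1%:R : R) by rewrite ler1n.
  have := nC_ge0 a => ha hk.
  by move: a1 ha hk; clear; nra.
by move: H1 H2 Hx3; clear; lra.
Qed.
Lemma notuniq_perm (X : eqType) (s : seq X) : ~~ uniq s -> exists z s', perm_eq s (z :: z :: s').
Proof.
elim: s => // x t IH /=; rewrite negb_and negbK => /orP[xt | nut].
  by exists x, (rem x t); rewrite perm_cons perm_to_rem.
have [z [s' p]] := IH nut; exists z, (x :: s').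
apply: perm_trans (_ : perm_eq _ (x :: z :: z :: s')) _; first by rewrite perm_cons.
by rewrite (perm_catCA [:: x] [:: z; z] s').
Qed.
Lemma key_prop n (T : 'M[C]_n.+1) (z : C) (Y : 'M[C]_n.+1) : recurrent T ->
  (T - z%:M) *m ((T - z%:M) *m Y) = 0 -> (T - z%:M) *m Y = 0.
Proof.
move=> rT H; apply/eqP; apply/negPn/negP => nz.
have [i [j ij]] : exists i j, ((T - z%:M) *m Y) i j != 0.
  case: (boolP [exists i, exists j, ((T - z%:M) *m Y) i j != 0]).
    by move=> /existsP[i /existsP[j h]]; exists i, j.
  rewrite negb_exists => /forallP H1; exfalso; apply: (negP nz).
  apply/eqP/matrixP => i j.
  have -> : (0 : 'M[C]_n.+1) i j = 0 by rewrite mxE.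
  apply/eqP.
  by have /existsPn/(_ j) := H1 i; rewrite negbK.
set A := T - z%:M.
pose w2 := col j Y; pose w1 := A *m w2.
have w1E : w1 = col j (A *m Y) by rewrite /w1 /w2 !colE mulmxA.
have w10 : w1 != 0.
  apply: contraNneq ij => e.
  have cE : forall (M : 'M[C]_n.+1) k, (col j M) k 0 = M k j by move=> M k; rewrite mxE.
  have z0 : (0 : 'cV[C]_n.+1) i 0 = 0 by rewrite mxE.
  by rewrite -cE -w1E e z0.
have Aw1 : A *m w1 = 0 by rewrite w1E !colE mulmxA H mul0mx.
have Tw1 : T *m w1 = z *: w1.
  by apply/eqP; rewrite -subr_eq0 -mul_scalar_mx -mulmxBl -/A Aw1.
have Tw2 : T *m w2 = z *: w2 + w1.
  by rewrite /w1 /A mulmxBl mul_scalar_mx addrC subrK.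
have nz1 := rec_eig _ _ _ _ rT w10 Tw1.
exact: (rec_chain _ _ _ _ _ rT w10 nz1 Tw1 Tw2).
Qed.
Lemma rec_diag n (T : 'M[C]_n.+1) : recurrent T -> diagonalizable T.
Proof.
move=> rT; have [s hs] := closed_field_poly_normal (mxminpoly T).
move: hs; rewrite (monicP (mxminpoly_monic T)) scale1r => hs.
apply/diagonalizableP; exists s; last by rewrite hs.
apply/negPn/negP => /notuniq_perm [z [s' p]].
move: hs; rewrite (perm_big _ p) /= !big_cons => hs.
set r := \prod_(j <- s') ('X - j%:P) in hs.
have key := key_prop _ T z (horner_mx T r) rT.
have H0 : horner_mx T (('X - z%:P) * r) = 0.
  rewrite rmorphM rmorphB /= horner_mx_X horner_mx_C -mulmxE.
  apply: key.
  have := mx_root_minpoly T; rewrite hs !rmorphM !rmorphB /= horner_mx_X horner_mx_C.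
  by rewrite -!mulmxE.
have mq : ('X - z%:P) * r \is monic by rewrite monicMl ?monicXsubC // monic_prod_XsubC.
have := dvdp_leq (monic_neq0 mq) (mxminpoly_min H0).
rewrite hs size_monicM ?monicXsubC ?monic_neq0 // size_XsubC /=.
by rewrite ltnn.
Qed.
Lemma Re_le (z : C) : `|complex.Re (z : R[i])| <= nC z.
Proof. by case: z => a b; apply: Re_leG. Qed.
Lemma Im_le (z : C) : `|complex.Im (z : R[i])| <= nC z.
Proof. by case: z => a b; apply: Im_leG. Qed.
Lemma nC_ReIm (z : C) : nC z <= `|complex.Re (z : R[i])| + `|complex.Im (z : R[i])|.
Proof. by case: z => a b; apply: nC_ReImG. Qed.
Lemma ReB (u v : C) : complex.Re ((u - v : C) : R[i]) = complex.Re (u : R[i]) - complex.Re (v : R[i]).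
Proof. exact: ReBG. Qed.
Lemma ImB (u v : C) : complex.Im ((u - v : C) : R[i]) = complex.Im (u : R[i]) - complex.Im (v : R[i]).
Proof. exact: ImBG. Qed.
Lemma quant_close (N : nat) (t s : R) : 0 < (N%:R : R) -> -1 <= t <= 1 -> -1 <= s <= 1 ->
  Num.truncn ((t + 1) * N%:R) = Num.truncn ((s + 1) * N%:R) -> `|t - s| * N%:R < 1.
Proof.
move=> N0 /andP[t1 t2] /andP[s1 s2] e.
have ht : 0 <= (t + 1) * N%:R by rewrite mulr_ge0 ?(ltW N0) //; lra.
have hs : 0 <= (s + 1) * N%:R by rewrite mulr_ge0 ?(ltW N0) //; lra.
have /andP[a1 a2] := truncn_itv ht; have /andP[b1 b2] := truncn_itv hs.
move: a1 a2; rewrite e => a1 a2.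
have -> : `|t - s| * N%:R = `|(t - s) * N%:R| by rewrite normrM (ger0_norm (ltW N0)).
rewrite ltr_norml; apply/andP; split.
  move: a1 a2 b1 b2; rewrite -[(Num.truncn _).+1%:R]natr1; clear; nra.
move: a1 a2 b1 b2; rewrite -[(Num.truncn _).+1%:R]natr1; clear; nra.
Qed.
Lemma re_bound (u : C) : nC u = 1 -> -1 <= complex.Re (u : R[i]) <= 1.
Proof. by move=> h; rewrite -ler_norml -h; exact: Re_le. Qed.
Lemma im_bound (u : C) : nC u = 1 -> -1 <= complex.Im (u : R[i]) <= 1.
Proof. by move=> h; rewrite -ler_norml -h; exact: Im_le. Qed.
Lemma dirichlet d (D : 'rV[C]_d) (delta : R) : (forall j, nC (D 0 j) = 1) -> 0 < delta ->
  exists k, (0 < k)%N /\ forall j, nC (D 0 j ^+ k - 1) < delta.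
Proof.
move=> hD hdel.
set N := (Num.truncn (2 / delta)).+1.
have N0 : 0 < (N%:R : R) by rewrite ltr0n.
have hN : 2 < delta * N%:R.
  have h := truncnS_gt (2 / delta).
  have e2 : 2 = 2 / delta * delta by rewrite divfK // gt_eqF.
  rewrite -/N in h; rewrite [X in X < _]e2 mulrC ltr_pM2l //.
pose q (t : R) : 'I_(N.*2).+1 := inord (Num.truncn ((t + 1) * N%:R)).
have qP t s : -1 <= t <= 1 -> -1 <= s <= 1 -> q t = q s -> `|t - s| * N%:R < 1.
  move=> ht hs e; apply: quant_close => //.
  have bd (x : R) : -1 <= x <= 1 -> (Num.truncn ((x + 1) * N%:R) < (N.*2).+1)%N.
    move=> /andP[x1 x2]; rewrite truncn_lt_nat; last by rewrite mulr_ge0 ?(ltW N0) //; lra.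
    rewrite -natr1 -muln2 natrM.
    have : (x + 1) * N%:R <= N%:R * 2%:R by rewrite mulrC ler_wpM2l ?(ltW N0) //; lra.
    lra.
  by rewrite -(inordK (bd _ ht)) -(inordK (bd _ hs)); congr val.
pose Fn := {ffun 'I_d -> 'I_(N.*2).+1 * 'I_(N.*2).+1}.
set M := #|{: Fn}|.
pose g (i : 'I_M.+1) : Fn := [ffun j => (q (complex.Re ((D 0 j ^+ i : C) : R[i])), q (complex.Im ((D 0 j ^+ i : C) : R[i])))].
have [i1 [i2 [ne eq]]] : exists i1 i2, i1 != i2 /\ g i1 = g i2.
  apply: boolp.contrapT => H.
  have inj : injective g.
    move=> x y e; apply: boolp.contrapT => nxy; apply: H; exists x, y; split => //.
    by apply/eqP.
  by have := leq_card _ inj; rewrite card_ord ltnn.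
have main (a b : nat) : (a < b)%N ->
    (forall j, q (complex.Re ((D 0 j ^+ a : C) : R[i])) = q (complex.Re ((D 0 j ^+ b : C) : R[i])) /\
               q (complex.Im ((D 0 j ^+ a : C) : R[i])) = q (complex.Im ((D 0 j ^+ b : C) : R[i]))) ->
    exists k, (0 < k)%N /\ forall j, nC (D 0 j ^+ k - 1) < delta.
  move=> ab H; exists (b - a)%N; split; first by rewrite subn_gt0.
  move=> j; have [h1 h2] := H j.
  have nu : nC (D 0 j ^+ a) = 1 by rewrite nCX hD expr1n.
  have nv : nC (D 0 j ^+ b) = 1 by rewrite nCX hD expr1n.
  have r1 := qP _ _ (re_bound _ nu) (re_bound _ nv) h1.
  have r2 := qP _ _ (im_bound _ nu) (im_bound _ nv) h2.
  have e : D 0 j ^+ a - D 0 j ^+ b = D 0 j ^+ a * (1 - D 0 j ^+ (b - a)).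
    by rewrite mulrBr mulr1 -exprD subnKC // ltnW.
  have : nC (D 0 j ^+ a - D 0 j ^+ b) * N%:R < 2.
    have := nC_ReIm (D 0 j ^+ a - D 0 j ^+ b); rewrite ReB ImB => hle.
    have : nC (D 0 j ^+ a - D 0 j ^+ b) * N%:R <= (`|complex.Re ((D 0 j ^+ a : C) : R[i]) - complex.Re ((D 0 j ^+ b : C) : R[i])| + `|complex.Im ((D 0 j ^+ a : C) : R[i]) - complex.Im ((D 0 j ^+ b : C) : R[i])|) * N%:R.
      by rewrite ler_wpM2r // ltW.
    by move: r1 r2; clear; lra.
  rewrite e nCM nu mul1r nCB => h.
  have hn := nC_ge0 (D 0 j ^+ (b - a) - 1).
  move: h hN hn N0; clear; nra.
have [lt|gt] : (i1 < i2)%N \/ (i2 < i1)%N.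
  by move: ne; rewrite neq_ltn => /orP[]; [left|right].
  apply: (main _ _ lt) => j; have := congr1 (fun f : Fn => f j) eq; rewrite /= !ffunE.
  by case => -> ->.
apply: (main _ _ gt) => j; have := congr1 (fun f : Fn => f j) eq; rewrite /= !ffunE.
by case => -> ->.
Qed.
Lemma pow_conj d (P : 'M[C]_d) (D : 'rV[C]_d) k : P \in unitmx ->
  (invmx P *m diag_mx D *m P) ^+ k = invmx P *m diag_mx (\row_i (D 0 i ^+ k)) *m P.
Proof.
move=> Pu; elim: k => [|k IH].
  rewrite expr0 (_ : \row_i (D 0 i ^+ 0) = const_mx 1); last first.
    by apply/matrixP => i j; rewrite !mxE expr0.
  by rewrite diag_const_mx mulmx1 mulVmx.
rewrite exprSr IH -mulmxE -!mulmxA (mulmxA P (invmx P)) mulmxV // mul1mx.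
rewrite (mulmxA (diag_mx _)) mulmx_diag.
congr (_ *m (diag_mx _ *m _)); apply/matrixP => i j; by rewrite !mxE exprSr.
Qed.
Lemma sum_bound (I : finType) (F : I -> C) (G : I -> R) :
  (forall i, nC (F i) <= G i) -> nC (\sum_i F i) <= \sum_i G i.
Proof.
move=> H; elim/big_ind2: _ => //.
- by rewrite nC0.
- move=> a1 a2 b1 b2 h1 h2; apply: le_trans (nCD _ _) _; exact: lerD.
Qed.
Lemma diag_rec d (T : 'M[C]_d) : similar_to_unimodular_diag T -> recurrent T.
Proof.
case=> P [D [Pu [hD ->]]] U oU [x Ux].
have [e e0 He] := (open_ballR _ U).1 oU x Ux.
set v := x *m invmx P.
pose S j := \sum_i nC (v 0 i) * nC (P i j).
have S0 j : 0 <= S j by apply: sumr_ge0 => i _; apply: mulr_ge0; apply: nC_ge0.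
set K := 1 + \sum_j S j.
have K0 : 0 < K by rewrite ltr_pwDl // sumr_ge0.
have hD' j : nC (D 0 j) = 1.
  by have := hD j; rewrite normE => -[].
have [k [k0 hk]] := dirichlet _ D (e / K) hD' (divr_gt0 e0 K0).
exists k; split => //; exists x; split => //; rewrite /preimage /= iter_lin.
apply: He => j.
have xE : x = v *m P by rewrite /v -mulmxA mulVmx // mulmx1.
rewrite pow_conj // !mulmxA -/v; clearbody v.
rewrite mul_mx_diag {1}xE !mxE -sumrB.
apply: le_lt_trans (_ : \sum_i nC (v 0 i) * nC (P i j) * (e / K) < _).
  apply: sum_bound => i; rewrite ?mxE.
  have -> : v 0 i * P i j - v 0 i * D 0 i ^+ k * P i j = v 0 i * P i j * (1 - D 0 i ^+ k).
    by rewrite mulrBr mulr1 mulrAC.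
  rewrite !nCM nCB; apply: ler_wpM2l; first by apply: mulr_ge0; apply: nC_ge0.
  exact/ltW/hk.
rewrite -mulr_suml -/(S j).
have SK : S j < K.
  have : S j <= \sum_j0 S j0 by rewrite (bigD1 j) //= lerDl sumr_ge0.
  rewrite /K; lra.
have eK : K * (e / K) = e by rewrite mulrC divfK // gt_eqF.
by rewrite -[X in _ < X]eK ltr_pM2r // divr_gt0.
Qed.
Lemma rec_to_diag n (T : 'M[C]_n.+1) : recurrent T -> similar_to_unimodular_diag T.
Proof.
move=> rT; have [P Pu /(similar_diagLR Pu) [D TE]] := rec_diag _ T rT.
have TE' : T = invmx P *m diag_mx D *m P.
  by rewrite TE conjumx ?unitmx_inv // invmxK.
exists P, D; split => //; split => //.
move=> j; rewrite normE.
pose w := col j (invmx P).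
have Tw : T *m w = D 0 j *: w.
  have : T *m invmx P = invmx P *m diag_mx D.
    by rewrite TE' -!mulmxA mulmxV // mulmx1.
  have -> : T *m w = col j (T *m invmx P) by rewrite /w !colE mulmxA.
  move=> ->; rewrite mul_mx_diag.
  by apply/matrixP => i k; rewrite !mxE mulrC.
have w0 : w != 0.
  apply/negP => /eqP w0.
  have : col j (P *m invmx P) = P *m w by rewrite /w !colE mulmxA.
  rewrite mulmxV // w0 mulmx0 => /matrixP /(_ j 0).
  rewrite !mxE eqxx /= => /eqP; rewrite oner_eq0.
  done.
by rewrite (rec_eig _ _ _ _ rT w0 Tw).
Qed.
End S.
Theorem theorem4p1 (R : realType) (d : nat) (hd : (0 < d)%N) (T : 'M[Cplx R]_d) :
  recurrent T <-> similar_to_unimodular_diag T.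
Proof.
split; last exact: diag_rec.
case: d hd T => // n _ T; exact: rec_to_diag.
Qed.
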